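(* $\mathrm{SLT}_1\subsetneq\mathrm{REG}_5^Z$.
   Context: Strictly locally testable languages: let $V$ be an alphabet and $k\ge1$. For $B,I,E\subseteq V^k$ and $F\subseteq V^{\le k-1}$, $\mathrm{slt}(B,I,E,F)$ is the language over $V$ consisting of all words in $F$ together with all words $a_1\cdots a_n$ ($a_i\in V$, $n\ge k$) with $a_1\cdots a_k\in B$, $a_{j+1}\cdots a_{j+k}\in I$ for all $1\le j\le n-k-1$, and $a_{n-k+1}\cdots a_n\in E$. $\mathrm{SLT}_k$ is the family of languages of this form (strictly locally $k$-testable languages). For a regular language $L\subseteq V^*$, $\mathrm{State}(L)$ is the minimum number of states of a deterministic finite automaton $(V,Z,z_0,F,\delta)$ with total transition function $\delta:Z\times V\to Z$ accepting $L$; $\mathrm{REG}_n^Z=\{L\text{ regular}:\mathrm{State}(L)\le n\}$. *)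

(* Defs.v *)
From mathcomp Require Import all_boot.
Set Implicit Arguments. Unset Strict Implicit. Unset Printing Implicit Defensive.

Definition language (V : finType) := seq V -> Prop.

(* slt(B,I,E,F): words in F, plus words a_1..a_n (n >= k) whose first k-factor
   is in B, whose k-factors a_{j+1}..a_{j+k} (1 <= j <= n-k-1) are in I, and
   whose last k-factor is in E.  take k (drop j w) = a_{j+1}..a_{j+k}. *)
Definition slt (V : finType) (k : nat) (B I E F : seq V -> Prop) : language V :=
  fun w => F w \/
    (k <= size w /\ B (take k w) /\
     (forall j, 1 <= j -> j <= size w - k - 1 -> I (take k (drop j w))) /\
     E (drop (size w - k) w)).

Definition SLT (k : nat) (V : finType) (L : language V) : Prop :=
  exists (B I E F : seq V -> Prop),
    (forall w, B w -> size w = k) /\ (forall w, I w -> size w = k) /\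
    (forall w, E w -> size w = k) /\ (forall w, F w -> size w <= k - 1) /\
    (forall w, L w <-> slt k B I E F w).

Definition dfa_accepts (V Z : finType) (z0 : Z) (Fin : pred Z)
  (delta : Z -> V -> Z) (w : seq V) : bool := Fin (foldl delta z0 w).

(* REG_n^Z: regular languages with State(L) <= n, i.e. accepted by some complete
   DFA with at most n states. *)
Definition REGZ (n : nat) (V : finType) (L : language V) : Prop :=
  exists (Z : finType) (z0 : Z) (Fin : pred Z) (delta : Z -> V -> Z),
    #|Z| <= n /\ (forall w, L w <-> dfa_accepts z0 Fin delta w).

(* Main.v *)
Require Import Defs.
From mathcomp Require Import all_boot.
From mathcomp Require Import zify.
From Stdlib Require Import ClassicalDescription.

Definition pb (P : Prop) : bool := if excluded_middle_informative P then true else false.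

Lemma pbE (P : Prop) : pb P = true <-> P.
Proof. rewrite /pb; case: excluded_middle_informative => //. Qed.

Lemma pb_ext (P Q : Prop) : (P <-> Q) -> pb P = pb Q.
Proof.
move=> h; rewrite /pb; case: excluded_middle_informative => a; case: excluded_middle_informative => b //; exfalso; tauto.
Qed.

Section S1.
Variables (V : finType) (B I E F : seq V -> Prop).

Definition Sw (w : seq V) : Prop := 1 <= size w /\ B (take 1 w) /\
  (forall j, 1 <= j -> j <= size w - 1 - 1 -> I (take 1 (drop j w))).

Definition Pw (w : seq V) : Prop := Sw w /\ (size w = 1 \/ I (drop (size w - 1) w)).
Definition Qw (w : seq V) : Prop := Sw w /\ E (drop (size w - 1) w).

Lemma drop_last (u : seq V) c : drop (size (rcons u c) - 1) (rcons u c) = [:: c].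
Proof.
rewrite size_rcons subn1 /= drop_rcons // drop_size //.
Qed.

Lemma S1 c : Sw [:: c] <-> B [:: c].
Proof. rewrite /Sw /=; split; [tauto | move=> h; split=> //; split=> // j; lia]. Qed.

Lemma Sstep (u : seq V) c : 1 <= size u -> (Sw (rcons u c) <-> Pw u).
Proof.
move=> hu.
have ht : take 1 (rcons u c) = take 1 u by rewrite -cats1 takel_cat.
have hd : forall j, j < size u -> take 1 (drop j (rcons u c)) = take 1 (drop j u).
  move=> j hj; rewrite drop_rcons ?(ltnW hj) // -cats1 takel_cat // size_drop; lia.
rewrite /Pw /Sw size_rcons ht; split.
- move=> [_ [hB hI]]; split; first split => //; first split => //.
    move=> j h1 h2; rewrite -hd; last lia. apply: hI; lia.
  case: (ltngtP (size u) 1) => h; [lia| |by left].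
  right; have := hI (size u - 1); rewrite hd; last lia.
  rewrite take_oversize; last by rewrite size_drop; lia.
  move=> H; apply: H; lia.
- move=> [[_ [hB hI]] hL]; split; first lia; split => // j h1 h2.
  rewrite hd; last lia.
  case: (ltnP j (size u - 1)) => h3; first by apply: hI; lia.
  have -> : j = size u - 1 by lia.
  case: hL => [hL|hL]; first lia.
  rewrite take_oversize // size_drop; lia.
Qed.

Definition delta (z : option (bool * bool)) (c : V) : option (bool * bool) :=
  match z with
  | None => Some (pb (B [:: c]), pb (B [:: c] /\ E [:: c]))
  | Some (p, q) => if p then Some (pb (I [:: c]), pb (E [:: c])) else Some (false, false)
  end.

Lemma inv (w : seq V) : 1 <= size w -> foldl delta None w = Some (pb (Pw w), pb (Qw w)).
Proof.
elim/last_ind: w => [//|u c IH] _.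
rewrite foldl_rcons.
case: (posnP (size u)) => hu.
  move/size0nil: hu => ->.
  rewrite /=; congr (Some (_, _)); apply: pb_ext; rewrite /Pw /Qw S1 /=; tauto.
rewrite IH //.
have hS := Sstep u c hu.
have hl := drop_last u c.
have hs : size (rcons u c) = 1 -> False by rewrite size_rcons; lia.
case hp: (pb (Pw u)) => /=.
  move/pbE: hp => hp.
  congr (Some (_, _)); apply/esym; apply: pb_ext; rewrite /Pw /Qw hl.
    split; [move=> [_ [h|h]] //; exfalso; exact: hs h | move=> h; split; [tauto|by right]].
  tauto.
have hn : ~ Sw (rcons u c) by move=> h; move: hp; rewrite (proj2 (pbE _)) //; tauto.
congr (Some (_, _)); apply/esym/negbTE/negP => /pbE; rewrite /Pw /Qw; tauto.
Qed.

End S1.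

Lemma even_fold (w : seq bool) z : foldl (fun (z : bool) (_ : bool) => ~~ z) z w = z (+) odd (size w).
Proof.
elim: w z => [|a w IH] z /=; first by rewrite addbF.
by rewrite IH; case: z; case: (odd _).
Qed.

Theorem mainTheorem7 :
  (forall (V : finType) (L : language V), SLT 1 L -> REGZ 5 L) /\
  (exists (V : finType) (L : language V), REGZ 5 L /\ ~ SLT 1 L).
Proof.
split.
- move=> V L [B [I [E [F [hB [hI [hE [hF hL]]]]]]]].
  exists (option (bool * bool))%type, None,
    (fun z => match z with None => pb (F [::]) | Some (_, q) => q end),
    (@delta V B I E).
  split; first by rewrite card_option card_prod card_bool.
  move=> w; rewrite hL /dfa_accepts /slt.
  case: w => [|a w'].
    rewrite /=; split; first (case=> [h|]; [by apply/pbE|]); first by move=> [h _].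
    by move/pbE; left.
  set w := a :: w'.
  rewrite (@inv V B I E) //=.
  have hnF : ~ F w by move=> /hF; rewrite /w /=; lia.
  split.
    case=> [//|[h1 [h2 [h3 h4]]]]; apply/pbE; split; first by split.
    exact: h4.
  move/pbE=> [[h1 [h2 h3]] h4]; right; split => //; split => //; split => //.
- exists bool, (fun w : seq bool => ~~ odd (size w) = true).
  split.
    exists bool, true, (fun z => z), (fun z _ => ~~ z).
    split; first by rewrite card_bool.
    by move=> w; rewrite /dfa_accepts even_fold addTb.
  move=> [B [I [E [F [hB [hI [hE [hF hL]]]]]]]].
  have h2 := proj1 (hL [:: true; true]) erefl.
  have h4 := proj1 (hL [:: true; true; true; true]) erefl.
  have F2 : ~ F [:: true; true] by move/hF.
  have F4 : ~ F [:: true; true; true; true] by move/hF.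
  case: h2 => [//|[_ [b2 [_ e2]]]].
  case: h4 => [//|[_ [_ [i4 _]]]].
  have := proj2 (hL [:: true; true; true]).
move=> H; suff: false = true by [].
  apply: H; right; split => //; split => //; split.
    move=> j h1 h2; have -> : j = 1 by move: h1 h2 => /=; lia.
    exact: (i4 1 erefl erefl).
  exact: e2.
Qed.
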